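(* Let $q$ be an odd prime power and $f(X)=X(X^{q-1}-c)^{q+1}$ on $\mathbb{F}_{q^2}$, with $a,\beta,g,L_{[u:v]},\mathbb{P}^1$ as in the context. If $c\in\mathbb{F}_q\setminus\{0,1,-1\}$, then $\mathcal{G}(f)$ is isomorphic to \[ \mathcal{C}_1\oplus\bigoplus_{L_{[u:v]}\in\mathbb{P}^1}\frac{q-1}{\operatorname{ord}(g(u,v))}\times\mathcal{C}_{\operatorname{ord}(g(u,v))}. \] If $c=\pm1$, then $\mathcal{G}(f)$ is isomorphic to \[ (\mathcal{C}_1,\mathcal{T}_{q-1})\oplus\bigoplus_{L_{[u:v]}\in\mathbb{P}^1\setminus\{L_0\}}\frac{q-1}{\operatorname{ord}(g(u,v))}\times\mathcal{C}_{\operatorname{ord}(g(u,v))}, \] where $L_0=L_{[1:0]}$ if $c=1$ and $L_0=L_{[0:1]}$ if $c=-1$.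
   Context: $a\in\mathbb{F}_q^*$ is a non-square in $\mathbb{F}_q$, $\beta\in\mathbb{F}_{q^2}$ with $\beta^2=a$; every element of $\mathbb{F}_{q^2}$ is uniquely $x+y\beta$, $x,y\in\mathbb{F}_q$. For $(x,y)\neq(0,0)$, $g(x,y)=\frac{(1-c)^2x^2-(1+c)^2y^2a}{x^2-y^2a}\in\mathbb{F}_q$, which is invariant under scaling $(x,y)$ by $\mathbb{F}_q^*$. For $(u,v)\neq(0,0)$, $L_{[u:v]}=\{\lambda(u+v\beta):\lambda\in\mathbb{F}_q\}$ and $\mathbb{P}^1$ is the set of these $q+1$ lines; $\operatorname{ord}(g(u,v))$ is the multiplicative order in $\mathbb{F}_q^*$. $\mathcal{G}(f)$ is the functional graph (vertices $\mathbb{F}_{q^2}$, edges $\langle x,f(x)\rangle$). Graph notation: $\mathcal{C}_n$ is an oriented cycle of length $n$; $\mathcal{T}_m$ is the directed tree with $m+1$ vertices $P_1,\dots,P_{m+1}$ and edges $P_i\to P_{m+1}$ for $1\le i\le m$; $(\mathcal{C}_n,\mathcal{T}_m)$ is the graph obtained by replacing each vertex of $\mathcal{C}_n$ by a copy of $\mathcal{T}_m$ (identifying the cycle vertex with the root $P_{m+1}$); $\mathcal{G}\oplus\mathcal{H}$ is disjoint union; $k\times\mathcal{H}$ is the disjoint union of $k$ copies of $\mathcal{H}$. *)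

(* Defs.v *)
From HB Require Import structures.
From mathcomp Require Import all_boot all_order all_algebra all_fingroup.
Set Implicit Arguments. Unset Strict Implicit. Unset Printing Implicit Defensive.
Import GRing.Theory.
Local Open Scope ring_scope.

Record fgraph := FGraph { fg_sort :> finType; fg_fun : fg_sort -> fg_sort }.

Definition fg_iso (G H : fgraph) : Prop :=
  exists h : G -> H, bijective h /\
    forall x y : G, (@fg_fun G x == y) = (@fg_fun H (h x) == h y).

Definition Ccycle (n : nat) : fgraph := @FGraph 'I_n (@ordS n).

(* (C_n, T_m): each cycle vertex replaced by a copy of T_m (None = root P_{m+1},
   Some j = leaf P_{j+1} pointing to the root). *)
Definition CT (n m : nat) : fgraph :=
  @FGraph ('I_n * option 'I_m)%type
    (fun p => match p.2 with
              | None => (ordS p.1, None)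
              | Some _ => (p.1, None) end).

Definition fg_sum (G H : fgraph) : fgraph :=
  @FGraph (G + H)%type
    (fun p => match p with
              | inl x => inl (@fg_fun G x)
              | inr y => inr (@fg_fun H y) end).

Definition fg_copies (k : nat) (H : fgraph) : fgraph :=
  @FGraph ('I_k * H)%type (fun p => (p.1, @fg_fun H p.2)).

Definition fg_big (I : finType) (G : I -> fgraph) : fgraph :=
  @FGraph {i : I & G i}
    (fun p => Tagged (fun i => fg_sort (G i)) (@fg_fun (G (tag p)) (tagged p))).

Definition fgraph_of (T : finType) (f : T -> T) : fgraph := @FGraph T f.

Section FqSq.
Variables (F : finFieldType) (q : nat) (a beta : F).

Definition Fq : {set F} := [set x : F | x ^+ q == x].

Definition gfun (c x y : F) : F :=
  ((1 - c) ^+ 2 * x ^+ 2 - (1 + c) ^+ 2 * y ^+ 2 * a) / (x ^+ 2 - y ^+ 2 * a).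

Definition Lline (u v : F) : {set F} := [set l * (u + v * beta) | l in Fq].

Definition P1 : {set {set F}} :=
  [set Lline uv.1 uv.2 | uv in [set uv : F * F |
     (uv.1 \in Fq) && (uv.2 \in Fq) && (uv != (0, 0))]].

Definition line_rep (L : {set F}) : F * F :=
  odflt (1, 0) [pick uv : F * F | (uv.1 \in Fq) && (uv.2 \in Fq)
                                   && (uv != (0, 0)) && (L == Lline uv.1 uv.2)].

Definition mord (x : F) : nat :=
  match insub x : option {unit F} with Some u => #[u]%g | None => 0%N end.

(* ord(g(u,v)) for the line L = L_[u:v] (g is invariant under scaling). *)
Definition ordL (c : F) (L : {set F}) : nat :=
  mord (gfun c (line_rep L).1 (line_rep L).2).

Definition lines_part (c : F) (S : {set {set F}}) : fgraph :=
  @fg_big {L : {set F} | L \in S}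
    (fun L => fg_copies ((q - 1) %/ ordL c (val L)) (Ccycle (ordL c (val L)))).

End FqSq.

Definition fpoly (F : finFieldType) (q : nat) (c : F) (x : F) : F :=
  x * (x ^+ (q - 1) - c) ^+ (q + 1).

(* Main.v *)
Require Import Defs.
From HB Require Import structures.
From mathcomp Require Import all_boot all_order all_algebra all_fingroup.
From mathcomp Require Import all_solvable all_field.
From mathcomp Require Import zify ring.
Import GRing.Theory FinRing.Theory.

Lemma bij_inj_surj (A B : finType) (k : A -> B) :
  injective k -> (forall y, exists x, k x = y) -> bijective k.
Proof.
move=> ik sk.
have H : forall y, y \in codom k.
  by move=> y; apply/codomP; have [x <-] := sk y; exists x.
by exists (fun y => iinv (H y)) => y; rewrite ?iinv_f ?f_iinv.
Qed.

Lemma iso_of_conj (G H : Defs.fgraph) (k : H -> G) :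
  bijective k -> (forall y, k (fg_fun y) = fg_fun (k y)) -> fg_iso G H.
Proof.
move=> [g kg gk] hk; exists g; split; first by exists k.
move=> x y; rewrite -{1}(gk x) -hk.
apply/eqP/eqP => [<-|e]; first exact: (esym (kg _)).
by rewrite -(gk y) -e.
Qed.

Section Orb.
Variables (T : finType) (f : T -> T) (S : {set T}) (n : nat) (x0 : T).
Hypothesis fS : forall x, x \in S -> f x \in S.
Hypothesis per : forall x j, x \in S -> (iter j f x == x) = (n %| j).
Hypothesis n_gt0 : (0 < n)%N.

Definition orbR := [set x in S | [forall j : 'I_n, enum_rank x <= enum_rank (iter j f x)]].
Definition orbE (d : nat) (p : 'I_d * 'I_n) : T := iter p.2 f (nth x0 (enum orbR) p.1).

Lemma iter_in x j : x \in S -> iter j f x \in S.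
Proof. by move=> xS; elim: j => //= j IH; apply: fS. Qed.

Lemma iter_muln x m : x \in S -> iter (m * n) f x = x.
Proof.
move=> xS; elim: m => // m IH; rewrite mulSn iterD IH.
by apply/eqP; rewrite per // dvdnn.
Qed.

Lemma iter_mod x j : x \in S -> iter j f x = iter (j %% n) f x.
Proof.
move=> xS; rewrite {1}(divn_eq j n) addnC iterD iter_muln // iter_in.
Qed.

Lemma orbR_sub x : x \in orbR -> x \in S.
Proof. by rewrite inE => /andP[]. Qed.

Lemma orbE_in d p : d = #|orbR| -> orbE d p \in S.
Proof.
move=> hd; apply: iter_in; apply: orbR_sub; rewrite -mem_enum; apply: mem_nth.
by rewrite -cardE -hd.
Qed.

Lemma orbR_min r k : r \in orbR -> enum_rank r <= enum_rank (iter k f r).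
Proof.
rewrite inE => /andP[rS /forallP h].
rewrite (@iter_mod r k rS).
exact: (h (Ordinal (ltn_pmod k n_gt0))).
Qed.

Lemma orbE_inj d : d = #|orbR| -> injective (orbE d).
Proof.
move=> hd [i j] [i' j']; rewrite /orbE /=.
set r := nth x0 _ i; set r' := nth x0 _ i'.
have rR : r \in orbR by rewrite -mem_enum; apply: mem_nth; rewrite -cardE -hd.
have rR' : r' \in orbR by rewrite -mem_enum; apply: mem_nth; rewrite -cardE -hd.
have rS := orbR_sub _ rR; have rS' := orbR_sub _ rR'.
have back : forall (y : T) (m : 'I_n), y \in S -> iter (n - m) f (iter m f y) = y.
  move=> y m yS; rewrite -iterD subnK ?(ltnW (ltn_ord m)) //.
  by apply/eqP; rewrite per // dvdnn.
move=> e.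
have e1 : r = iter (n - j + j') f r'.
  by rewrite iterD -e back.
have e2 : r' = iter (n - j' + j) f r.
  by rewrite iterD e back.
have rr : r = r'.
  apply: enum_rank_inj; apply: val_inj; apply/eqP; rewrite eqn_leq.
  apply/andP; split; first by rewrite e2 orbR_min.
  by rewrite e1 orbR_min.
have ii : i = i'.
  apply: val_inj; apply/eqP; rewrite -(nth_uniq x0 _ _ (enum_uniq (mem orbR))) -?cardE -?hd ?ltn_ord //.
  by apply/eqP.
subst i'; rewrite -/r in rr e2 *; clear e1.
have jj : (j : nat) = j'.
  have := @per r (n - j' + j) rS; rewrite -e2 -rr eqxx => /esym/dvdnP[m hm].
  have hj := ltn_ord j; have hj' := ltn_ord j'.
  case: m hm => [|[|m]] hm; try nia.
by congr (_, _); apply: val_inj.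
Qed.

Lemma orbE_surj d x : d = #|orbR| -> x \in S -> exists p, orbE d p = x.
Proof.
move=> hd xS; pose i0 := Ordinal n_gt0.
case: (@arg_minnP _ i0 xpredT (fun j : 'I_n => enum_rank (iter j f x))) => // j0 _ hmin.
set r := iter j0 f x.
have rS : r \in S by apply: iter_in.
have rR : r \in orbR.
  rewrite inE rS /=; apply/forallP => j; rewrite /r -iterD (@iter_mod x (j + j0) xS).
  exact: (hmin (Ordinal (ltn_pmod (j + j0) n_gt0)) isT).
have hi : (index r (enum orbR) < d)%N by rewrite hd cardE index_mem mem_enum.
exists (Ordinal hi, Ordinal (ltn_pmod (n - j0) n_gt0)); rewrite /orbE /=.
rewrite nth_index ?mem_enum // -iter_mod // /r -iterD subnK ?(ltnW (ltn_ord j0)) //.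
by apply/eqP; rewrite per // dvdnn.
Qed.

Lemma card_orbS : #|S| = (#|orbR| * n)%N.
Proof.
have -> : (#|orbR| * n)%N = #|{: 'I_(#|orbR|) * 'I_n}| by rewrite card_prod !card_ord.
rewrite -(card_image (orbE_inj _ (erefl _))).
apply: eq_card => x; apply/idP/idP.
  by move=> /(orbE_surj _ _ (erefl _)) [p <-]; apply: map_f; rewrite mem_enum.
by move=> /mapP [p _ ->]; apply: orbE_in.
Qed.

Lemma orb_embed d : d = (#|S| %/ n)%N ->
  [/\ injective (orbE d), (forall x, x \in S -> exists p, orbE d p = x),
      (forall p, orbE d p \in S) &
      (forall (i : 'I_d) (j : 'I_n), orbE d (i, ordS j) = f (orbE d (i, j)))].
Proof.
rewrite card_orbS mulnK // => hd; split.
- exact: orbE_inj.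
- by move=> x; apply: orbE_surj.
- by move=> p; apply: orbE_in.
move=> i j; rewrite /orbE /= -iterS.
have rS : nth x0 (enum orbR) i \in S by apply: orbR_sub; rewrite -mem_enum; apply: mem_nth; rewrite -cardE -hd.
by rewrite [RHS](@iter_mod _ _ rS).
Qed.
End Orb.

Local Open Scope ring_scope.
Set Implicit Arguments. Unset Strict Implicit.

Lemma gid (F : fieldType) (u v b c : F) : u + v * b != 0 -> u - v * b != 0 ->
  ((1 - c) ^+ 2 * u ^+ 2 - (1 + c) ^+ 2 * v ^+ 2 * b ^+ 2) / (u ^+ 2 - v ^+ 2 * b ^+ 2)
  = ((u + v * b) / (u - v * b) - c) * ((u - v * b) / (u + v * b) - c).
Proof.
move=> x0 xb.
have -> : u ^+ 2 - v ^+ 2 * b ^+ 2 = (u + v * b) * (u - v * b) by ring.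
by field; rewrite x0 xb.
Qed.

Section Field.
Variables (F : finFieldType) (q p k : nat) (a beta c : F).
Hypotheses (pP : prime p) (k_gt0 : (0 < k)%N) (qE : q = (p ^ k)%N) (qodd : odd q)
  (cardF : #|F| = (q ^ 2)%N) (aFq : a \in Fq F q) (a0 : a != 0)
  (nsq : forall b : F, b \in Fq F q -> b ^+ 2 != a) (bE : beta ^+ 2 = a)
  (cFq : c \in Fq F q).

Lemma charF : p \in [pchar F].
Proof. by apply: (@card_finPcharP _ p (k * 2)) => //; rewrite cardF qE expnM. Qed.

Lemma qnat : [pchar F].-nat q.
Proof. by rewrite qE pnatX pnatE // charF. Qed.

Lemma q_gt0 : (0 < q)%N.
Proof. by case: q qodd. Qed.

Lemma phiD (x y : F) : (x + y) ^+ q = x ^+ q + y ^+ q.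
Proof. exact: exprDn_pchar qnat. Qed.

Lemma phiN (x : F) : (- x) ^+ q = - x ^+ q.
Proof. exact: exprNn_pchar qnat. Qed.

Lemma phiB (x y : F) : (x - y) ^+ q = x ^+ q - y ^+ q.
Proof. by rewrite phiD phiN. Qed.

Lemma phiM (x y : F) : (x * y) ^+ q = x ^+ q * y ^+ q.
Proof. exact: exprMn. Qed.

Lemma phiV (x : F) : (x ^-1) ^+ q = (x ^+ q) ^-1.
Proof. by rewrite exprVn. Qed.

Lemma phi2 (x : F) : (x ^+ q) ^+ q = x.
Proof. by rewrite -exprM mulnn -cardF expf_card. Qed.

Lemma FqE (x : F) : (x \in Fq F q) = (x ^+ q == x).
Proof. by rewrite inE. Qed.

Lemma FqP (x : F) : reflect (x ^+ q = x) (x \in Fq F q).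
Proof. by rewrite FqE; apply: eqP. Qed.

Lemma Fq0 : (0 : F) \in Fq F q.
Proof. by apply/FqP; rewrite expr0n; case: q q_gt0. Qed.

Lemma Fq1 : (1 : F) \in Fq F q.
Proof. by apply/FqP; rewrite expr1n. Qed.

Lemma FqD (x y : F) : x \in Fq F q -> y \in Fq F q -> x + y \in Fq F q.
Proof. by move=> /FqP hx /FqP hy; apply/FqP; rewrite phiD hx hy. Qed.

Lemma FqN (x : F) : x \in Fq F q -> - x \in Fq F q.
Proof. by move=> /FqP hx; apply/FqP; rewrite phiN hx. Qed.

Lemma FqB (x y : F) : x \in Fq F q -> y \in Fq F q -> x - y \in Fq F q.
Proof. by move=> hx hy; apply: FqD => //; apply: FqN. Qed.

Lemma FqM (x y : F) : x \in Fq F q -> y \in Fq F q -> x * y \in Fq F q.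
Proof. by move=> /FqP hx /FqP hy; apply/FqP; rewrite phiM hx hy. Qed.

Lemma FqV (x : F) : x \in Fq F q -> x^-1 \in Fq F q.
Proof. by move=> /FqP hx; apply/FqP; rewrite phiV hx. Qed.

Lemma FqX (x : F) j : x \in Fq F q -> x ^+ j \in Fq F q.
Proof. by move=> hx; elim: j => [|j IH]; rewrite ?expr0 ?Fq1 // exprS FqM. Qed.

Lemma two_neq0 : (2 : F) != 0.
Proof.
rewrite -(dvdn_pcharf charF) dvdn_prime2 //; apply/eqP => p2.
by move: qodd; rewrite qE p2 oddX orbF; case: k k_gt0.
Qed.

Lemma Fq2 : (2 : F) \in Fq F q.
Proof. by rewrite -[2]/(1 + 1 : F) FqD ?Fq1. Qed.

Lemma beta0 : beta != 0.
Proof. by apply: contra a0 => /eqP b0; rewrite -bE b0 expr0n. Qed.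

Lemma betaq : beta ^+ q = - beta.
Proof.
have h : (beta ^+ q - beta) * (beta ^+ q + beta) = 0.
  rewrite -subr_sqr -exprM mulnC exprM bE.
  by move/FqP: aFq => ->; rewrite subrr.
move/eqP: h; rewrite mulf_eq0 => /orP[|]; last by rewrite addr_eq0 => /eqP.
rewrite subr_eq0 -FqE => bFq; have := nsq bFq; by rewrite bE eqxx.
Qed.

Lemma decomp (x : F) : exists u v, [/\ u \in Fq F q, v \in Fq F q & x = u + v * beta].
Proof.
have h2 := two_neq0; have hb := beta0; move/FqP: Fq2 => h2q.
exists ((x + x ^+ q) / 2), ((x - x ^+ q) / (2 * beta)); split.
- apply/FqP; rewrite phiM phiV phiD phi2 h2q addrC //.
- apply/FqP; rewrite phiM phiV phiB phi2 phiM h2q betaq.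
  by field; rewrite h2 hb oppr_eq0 hb.
- by set y := x ^+ q; field; rewrite h2 hb.
Qed.

Lemma uniq_decomp (u v u' v' : F) : u \in Fq F q -> v \in Fq F q ->
  u' \in Fq F q -> v' \in Fq F q -> u + v * beta = u' + v' * beta -> u = u' /\ v = v'.
Proof.
move=> hu hv hu' hv' e.
have hvv : v = v'.
  apply/eqP; rewrite -subr_eq0; apply/negPn/negP => hn.
  have hbe : beta = (u' - u) / (v - v').
    by apply: (mulIf hn); rewrite mulfVK // -[u'](addrK (v' * beta)) -e; ring.
  have bF : beta \in Fq F q by rewrite hbe FqM ?FqV ?FqB.
  by have := nsq bF; rewrite bE eqxx.
by subst v'; split => //; apply: (addIr (v * beta)).
Qed.

Lemma card_Fq : #|Fq F q| = q.
Proof.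
pose g (uv : F * F) := uv.1 + uv.2 * beta.
have inj : {in setX (Fq F q) (Fq F q) &, injective g}.
  move=> [u v] [u' v']; rewrite !in_setX /= => /andP[hu hv] /andP[hu' hv'] e.
  by have [-> ->] := uniq_decomp hu hv hu' hv' e.
have im : g @: setX (Fq F q) (Fq F q) = [set: F].
  apply/setP => x; rewrite inE; have [u [v [hu hv ->]]] := decomp x.
  by apply/imsetP; exists (u, v) => //; rewrite in_setX /= hu hv.
have := card_in_imset inj; rewrite im cardsT cardF cardsX mulnn => /eqP.
by rewrite eqn_exp2r // => /eqP.
Qed.

Lemma x0_neq0 (u v : F) : u \in Fq F q -> v \in Fq F q -> (u, v) != (0, 0) ->
  u + v * beta != 0.
Proof.
move=> hu hv; apply: contra => /eqP e.
have e' : u + v * beta = 0 + 0 * beta by rewrite mul0r addr0 e.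
by have [-> ->] := uniq_decomp hu hv Fq0 Fq0 e'.
Qed.

Lemma in_P1 (u v : F) : u \in Fq F q -> v \in Fq F q -> (u, v) != (0, 0) ->
  Lline q beta u v \in P1 q beta.
Proof. by move=> hu hv h; apply/imsetP; exists (u, v); rewrite // inE /= hu hv h. Qed.

Lemma P1P (L : {set F}) : L \in P1 q beta ->
  exists u v, [/\ u \in Fq F q, v \in Fq F q, (u, v) != (0, 0) & L = Lline q beta u v].
Proof.
by move=> /imsetP [[u v]]; rewrite inE /= => /andP[/andP[hu hv] h] ->; exists u, v.
Qed.

Lemma LlineP (u v y : F) :
  reflect (exists2 l, l \in Fq F q & y = l * (u + v * beta)) (y \in Lline q beta u v).
Proof. exact: imsetP. Qed.

Lemma line_gen (u v y l : F) : l \in Fq F q -> l != 0 -> y = l * (u + v * beta) ->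
  Lline q beta u v = [set m * y | m in Fq F q].
Proof.
move=> hl l0 ->; apply/setP => z; apply/LlineP/imsetP => [[m hm ->]|[m hm ->]].
  by exists (m / l); rewrite ?FqM ?FqV // mulrA divfK.
by exists (m * l); rewrite ?FqM // mulrA.
Qed.

Lemma line_uniq (L L' : {set F}) (y : F) : L \in P1 q beta -> L' \in P1 q beta ->
  y != 0 -> y \in L -> y \in L' -> L = L'.
Proof.
have key : forall L, L \in P1 q beta -> y != 0 -> y \in L -> L = [set m * y | m in Fq F q].
  move=> L0 /P1P [u [v [hu hv h ->]]] y0 /LlineP [l hl e].
  apply: (line_gen hl _ e); apply: contra y0 => /eqP l0; by rewrite e l0 mul0r.
by move=> hL hL' y0 yL yL'; rewrite (key L) // (key L').
Qed.

Lemma card_line (L : {set F}) : L \in P1 q beta -> #|L :\ 0| = (q - 1)%N.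
Proof.
move=> /P1P [u [v [hu hv h ->]]].
have x0 := x0_neq0 hu hv h.
have cL : #|Lline q beta u v| = q.
  by rewrite /Lline card_in_imset ?card_Fq //; move=> l m _ _; apply: mulIf.
have z : (0 : F) \in Lline q beta u v by apply/LlineP; exists 0; rewrite ?Fq0 ?mul0r.
move: cL; rewrite (cardsD1 0) z; set X := #|_ :\ _| => e. have e1 : (1 + X)%N = q := e. lia.
Qed.

Definition hf (y : F) := (y ^+ (q - 1) - c) ^+ (q + 1).

Lemma Fq_unit1 (l : F) : l \in Fq F q -> l != 0 -> l ^+ (q - 1) = 1.
Proof.
move=> /FqP hl l0; apply: (mulIf l0) => /=; rewrite -exprSr subn1 prednK ?q_gt0 // hl; exact: (esym (mul1r l)).
Qed.

Lemma hf_scale (l y : F) : l \in Fq F q -> l != 0 -> hf (l * y) = hf y.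
Proof. by move=> hl l0; rewrite /hf exprMn (Fq_unit1 hl l0) mul1r. Qed.

Lemma hf_Fq (y : F) : hf y \in Fq F q.
Proof.
rewrite /hf; set z := _ - c; rewrite exprD expr1; apply/FqP.
by rewrite phiM phi2 mulrC.
Qed.

Lemma hf_eq0 (y : F) : (hf y == 0) = (y ^+ (q - 1) == c).
Proof. by rewrite /hf expf_eq0 addn1 /= subr_eq0. Qed.

Lemma gfunE (u v : F) : u \in Fq F q -> v \in Fq F q -> (u, v) != (0, 0) ->
  gfun a c u v = hf (u + v * beta).
Proof.
move=> hu hv h.
have x0 := x0_neq0 hu hv h.
have hv' : - v \in Fq F q by apply: FqN.
have h' : (u, - v) != (0, 0).
  by apply: contra h; rewrite !xpair_eqE oppr_eq0.
have xb := x0_neq0 hu hv' h'.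
move/FqP: (hu) => uq; move/FqP: (hv) => vq.
have e1 : (u + v * beta) ^+ q = u + - v * beta by rewrite phiD phiM uq vq betaq mulrN mulNr.
have e2 : (u + v * beta) ^+ (q - 1) = (u + - v * beta) / (u + v * beta).
  by apply: (mulIf x0) => /=; rewrite -exprSr subn1 prednK ?q_gt0 // e1 divfK.
move/FqP: cFq => cq.
rewrite /hf e2 exprD expr1 phiB phiM phiV e1 cq.
have -> : (u + - v * beta) ^+ q = u + v * beta by rewrite phiD phiM uq phiN vq betaq mulrN mulNr opprK.
rewrite /gfun -bE; move: xb; rewrite mulNr => xb; exact: gid.
Qed.

Lemma mordP (G : F) j : G != 0 -> (G ^+ j == 1) = (mord G %| j)%N.
Proof.
move=> G0; have hu : G \is a GRing.unit by rewrite unitfE.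
by rewrite /mord insubT order_dvdn -val_eqE /= val_unitX SubK.

Qed.

Lemma mord_gt0 (G : F) : G != 0 -> (0 < mord G)%N.
Proof.
move=> G0; have hu : G \is a GRing.unit by rewrite unitfE.
by rewrite /mord insubT order_gt0.
Qed.

Definition good (L : {set F}) := forall y, y \in L :\ 0 -> hf y != 0.

Lemma line_elt (L : {set F}) y : L \in P1 q beta -> y \in L :\ 0 ->
  exists u v l, [/\ u \in Fq F q, v \in Fq F q, (u, v) != (0, 0) & L = Lline q beta u v]
    /\ [/\ l \in Fq F q, l != 0 & y = l * (u + v * beta)].
Proof.
move=> /P1P [u [v [hu hv h ->]]] /setD1P [y0 /LlineP [l hl e]].
exists u, v, l; split => //; split => //.
by apply: contra y0 => /eqP l0; rewrite e l0 mul0r.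
Qed.

Lemma line_of (L : {set F}) y : L \in P1 q beta -> y \in L :\ 0 ->
  L = [set m * y | m in Fq F q].
Proof.
move=> hL /(line_elt hL) [u [v [l [[hu hv h ->] [hl l0 e]]]]].
exact: line_gen hl l0 e.
Qed.

Lemma scale_in (L : {set F}) y m : L \in P1 q beta -> y \in L :\ 0 ->
  m \in Fq F q -> m != 0 -> m * y \in L :\ 0.
Proof.
move=> hL hy hm m0; have := hy; rewrite !inE => /andP[y0 _].
rewrite mulf_neq0 //= (line_of hL hy); apply/imsetP; by exists m.
Qed.

Lemma hf_line (L : {set F}) y y' : L \in P1 q beta -> y \in L :\ 0 -> y' \in L :\ 0 ->
  hf y' = hf y.
Proof.
move=> hL hy; rewrite {1}(line_of hL hy) !inE => /andP[y0 /imsetP [m hm e]].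
rewrite e hf_scale //; apply: contra y0 => /eqP m0; by rewrite e m0 mul0r.
Qed.

Lemma rep_in (L : {set F}) : L \in P1 q beta ->
  (line_rep q beta L).1 + (line_rep q beta L).2 * beta \in L :\ 0 /\
  gfun a c (line_rep q beta L).1 (line_rep q beta L).2
    = hf ((line_rep q beta L).1 + (line_rep q beta L).2 * beta).
Proof.
move=> hL; rewrite /line_rep; case: pickP => [[u v] /= /andP[/andP[/andP[hu hv] h] /eqP eL]|none].
  split; last exact: gfunE.
  rewrite !inE x0_neq0 //= eL; apply/LlineP; exists 1; rewrite ?Fq1 ?mul1r //.
have [u [v [hu hv h eL]]] := P1P hL.
by have := none (u, v); rewrite /= hu hv h eL eqxx.
Qed.

Lemma ordL_line (L : {set F}) y : L \in P1 q beta -> y \in L :\ 0 ->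
  ordL q a beta c L = mord (hf y).
Proof.
move=> hL hy; have [hr hg] := rep_in hL.
by rewrite /ordL hg (hf_line hL hy hr).
Qed.

Lemma some_elt (L : {set F}) : L \in P1 q beta -> exists y, y \in L :\ 0.
Proof. by move=> hL; have [hr _] := rep_in hL; eexists; exact: hr. Qed.


Lemma fpolyE y : fpoly q c y = hf y * y.
Proof. by rewrite /fpoly mulrC. Qed.

Lemma iter_line (L : {set F}) y j : L \in P1 q beta -> y \in L :\ 0 -> hf y != 0 ->
  iter j (fpoly q c) y = hf y ^+ j * y.
Proof.
move=> hL hy h0; elim: j => [|j IH]; first by rewrite expr0 mul1r.
have Gj : hf y ^+ j \in Fq F q by apply: FqX; apply: hf_Fq.
have Gj0 : hf y ^+ j != 0 by rewrite expf_neq0.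
rewrite iterS IH fpolyE (hf_scale _ Gj Gj0).
by rewrite exprS mulrA.
Qed.

Unset Implicit Arguments.
Definition emb (L : {set F}) :=
  @orbE F (fpoly q c) (L :\ 0) (ordL q a beta c L) 0 ((q - 1) %/ ordL q a beta c L).
Set Implicit Arguments.

Lemma emb_props (L : {set F}) : L \in P1 q beta -> good L ->
  [/\ injective (emb L), (forall x, x \in L :\ 0 -> exists pp, emb L pp = x),
      (forall pp, emb L pp \in L :\ 0) &
      (forall i j, emb L (i, ordS j) = fpoly q c (emb L (i, j)))].
Proof.
move=> hL hg.
have fS : forall x, x \in L :\ 0 -> fpoly q c x \in L :\ 0.
  by move=> x hx; rewrite fpolyE scale_in ?hf_Fq ?hg.
have per : forall x j, x \in L :\ 0 ->
    (iter j (fpoly q c) x == x) = (ordL q a beta c L %| j)%N.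
  move=> x j hx; have := hx; rewrite !inE => /andP[x0 _].
  rewrite (iter_line _ hL hx (hg _ hx)) (ordL_line hL hx) -mordP ?hg //.
  apply/eqP/eqP => [e|->]; last by rewrite mul1r.
  by apply: (mulIf x0); rewrite /= mul1r.
have n0 : (0 < ordL q a beta c L)%N.
  by have [y hy] := some_elt hL; rewrite (ordL_line hL hy) mord_gt0 ?hg.
have := @orb_embed F (fpoly q c) (L :\ 0) (ordL q a beta c L) 0 fS per n0
  ((q - 1) %/ ordL q a beta c L).
by rewrite card_line //; move=> /(_ erefl).
Qed.

Unset Implicit Arguments.
Definition kS (S : {set {set F}}) (pp : lines_part q a beta c S) : F :=
  emb (val (tag pp)) (tagged pp).
Set Implicit Arguments.

Lemma kS_props (S : {set {set F}}) :
  (forall L, L \in S -> L \in P1 q beta) -> (forall L, L \in S -> good L) ->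
  [/\ injective (kS S), (forall pp, kS S pp \in val (tag pp) :\ 0),
      (forall x L, L \in S -> x \in L :\ 0 -> exists pp, kS S pp = x) &
      (forall pp, kS S (fg_fun pp) = fpoly q c (kS S pp))].
Proof.
move=> sP sG; split.
- move=> [[L hL] x] [[L' hL'] x']; rewrite /kS /= => e.
  have [i1 _ in1 _] := emb_props (sP _ hL) (sG _ hL).
  have [_ _ in2 _] := emb_props (sP _ hL') (sG _ hL').
  have y1 := in1 x; have y2 := in2 x'; rewrite -e in y2.
  have eL : L = L'.
    move: y1 y2; rewrite !inE => /andP[y0 y1] /andP[_ y2].
    exact: (line_uniq (sP _ hL) (sP _ hL') y0 y1 y2).
  subst L'; have -> : hL' = hL by apply: bool_irrelevance.
  by rewrite (i1 _ _ e).
- by move=> [[L hL] x]; rewrite /kS /=; have [_ _ h _] := emb_props (sP _ hL) (sG _ hL).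
- move=> x L hL hx; have [_ h _ _] := emb_props (sP _ hL) (sG _ hL).
  have [pp e] := h x hx.
  by exists (@Tagged _ (exist _ L hL) _ pp).
- move=> [[L hL] [i j]]; rewrite /kS /=.
  by have [_ _ _ h] := emb_props (sP _ hL) (sG _ hL); rewrite h.
Qed.

Lemma f0 : fpoly q c 0 = 0.
Proof. by rewrite fpolyE mulr0. Qed.

Lemma line_exists (y : F) : y != 0 -> exists2 L, L \in P1 q beta & y \in L :\ 0.
Proof.
move=> y0; have [u [v [hu hv e]]] := decomp y.
have h : (u, v) != (0, 0).
  apply: contra y0; rewrite xpair_eqE => /andP[/eqP u0 /eqP v0].
  by rewrite e u0 v0 mul0r addr0.
exists (Lline q beta u v); first exact: in_P1.
by rewrite !inE y0 /=; apply/LlineP; exists 1; rewrite ?Fq1 ?mul1r.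
Qed.

Lemma generic_iso : (forall L, L \in P1 q beta -> good L) ->
  fg_iso (fgraph_of (fpoly q c)) (fg_sum (Ccycle 1) (lines_part q a beta c (P1 q beta))).
Proof.
move=> hg.
have [kinj kin ksurj kcomm] := kS_props (fun L h => h) hg.
pose kk (s : fg_sum (Ccycle 1) (lines_part q a beta c (P1 q beta))) : F :=
  match s with inl _ => 0 | inr pp => kS _ pp end.
apply: (@iso_of_conj (fgraph_of (fpoly q c)) _ kk).
  apply: bij_inj_surj.
    move=> [i|pp] [i'|pp'] /=.
    - by rewrite (ord1 i) (ord1 i').
    - by move=> e; have := kin pp'; rewrite -e !inE eqxx.
    - by move=> e; have := kin pp; rewrite e !inE eqxx.
    - by move=> /kinj ->.
  move=> y; have [->|y0] := eqVneq y 0; first by exists (inl ord0).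
  have [L hL hy] := line_exists y0.
  by have [pp e] := ksurj y L hL hy; exists (inr pp).
by move=> [i|pp] /=; rewrite ?f0 ?kcomm.
Qed.

Lemma degen_iso (L0 : {set F}) : L0 \in P1 q beta ->
  (forall y, y \in L0 :\ 0 -> hf y = 0) ->
  (forall L, L \in P1 q beta -> L != L0 -> good L) ->
  fg_iso (fgraph_of (fpoly q c))
    (fg_sum (CT 1 (q - 1)) (lines_part q a beta c (P1 q beta :\ L0))).
Proof.
move=> hL0 h0 hg.
have sP : forall L, L \in P1 q beta :\ L0 -> L \in P1 q beta.
  by move=> L; rewrite !inE => /andP[].
have sG : forall L, L \in P1 q beta :\ L0 -> good L.
  by move=> L; rewrite !inE => /andP[ne hL]; apply: hg.
have [kinj kin ksurj kcomm] := kS_props sP sG.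
have cL0 := card_line hL0.
pose leaf (j : 'I_(q - 1)) : F := nth 0 (enum (L0 :\ 0)) j.
have leaf_in : forall j, leaf j \in L0 :\ 0.
  by move=> j; rewrite -mem_enum mem_nth // -cardE cL0.
have leaf_inj : injective leaf.
  move=> j j' e; apply: val_inj; apply/eqP.
  by rewrite -(nth_uniq 0 _ _ (enum_uniq (mem (L0 :\ 0)))) -?cardE ?cL0 ?ltn_ord //; apply/eqP.
pose kk (s : fg_sum (CT 1 (q - 1)) (lines_part q a beta c (P1 q beta :\ L0))) : F :=
  match s with
  | inl (_, None) => 0
  | inl (_, Some j) => leaf j
  | inr pp => kS _ pp end.
have nz : forall j, leaf j != 0 by move=> j; have := leaf_in j; rewrite !inE => /andP[].
have kz : forall pp, kS (P1 q beta :\ L0) pp != 0.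
  by move=> pp; have := kin pp; rewrite !inE => /andP[].
have lk : forall j pp, leaf j != kS (P1 q beta :\ L0) pp.
  move=> j pp; apply/negP => /eqP e.
  have h2 := kin pp; have h1 := leaf_in j; rewrite e in h1.
  have hL := valP (tag pp); rewrite /= !inE in hL; case/andP: hL => ne hL.
  move: h1 h2; rewrite !inE => /andP[y0 y1] /andP[_ y2].
  by have := line_uniq hL0 hL y0 y1 y2 => eL; move: ne; rewrite -eL eqxx.
apply: (@iso_of_conj (fgraph_of (fpoly q c)) _ kk).
  apply: bij_inj_surj.
    move=> [[i [j|]]|pp] [[i' [j'|]]|pp'] /=; rewrite ?(ord1 i) ?(ord1 i') //.
    - by move=> /leaf_inj ->.
    - by move=> e; have := nz j; rewrite e eqxx.
    - by move=> e; have := lk j pp'; rewrite e eqxx.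
    - by move=> e; have := nz j'; rewrite -e eqxx.
    - by move=> e; have := kz pp'; rewrite -e eqxx.
    - by move=> e; have := lk j' pp; rewrite e eqxx.
    - by move=> e; have := kz pp; rewrite e eqxx.
    - by move=> /kinj ->.
  move=> y; have [->|y0] := eqVneq y 0; first by exists (inl (ord0, None)).
  have [L hL hy] := line_exists y0.
  have [eL|ne] := eqVneq L L0.
    subst L.
    have hi : (index y (enum (L0 :\ 0%R)) < q - 1)%N by rewrite -cL0 cardE index_mem mem_enum.
    exists (inl (ord0, Some (Ordinal hi))); rewrite /= /leaf /=.
    by rewrite nth_index // mem_enum.
  have hL' : L \in P1 q beta :\ L0 by rewrite !inE ne.
  by have [pp e] := ksurj y L hL' hy; exists (inr pp).
move=> [[i [j|]]|pp] /=; rewrite ?f0 ?kcomm //.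
by rewrite fpolyE h0 ?mul0r.
Qed.

Lemma pow_norm (y : F) : y != 0 -> (y ^+ (q - 1)) ^+ (q + 1) = 1.
Proof.
move=> y0; rewrite -exprM; apply: (mulIf y0) => /=; rewrite mul1r -exprSr.
have -> : ((q - 1) * (q + 1)).+1 = #|F|.
  rewrite cardF; have := q_gt0; nia.
exact: expf_card.
Qed.

Lemma in_L0_1 (y : F) : y \in Fq F q -> y \in Lline q beta 1 0.
Proof. by move=> hy; apply/LlineP; exists y; rewrite // mul0r addr0 mulr1. Qed.

Lemma in_L0_m1 (y : F) : y / beta \in Fq F q -> y \in Lline q beta 0 1.
Proof.
move=> hy; apply/LlineP; exists (y / beta); rewrite // mul1r add0r divfK //.
exact: beta0.
Qed.

Lemma L0_1_P1 : Lline q beta 1 0 \in P1 q beta.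
Proof. by apply: in_P1; rewrite ?Fq1 ?Fq0 // xpair_eqE oner_eq0. Qed.

Lemma L0_m1_P1 : Lline q beta 0 1 \in P1 q beta.
Proof. by apply: in_P1; rewrite ?Fq1 ?Fq0 // xpair_eqE oner_eq0 andbF. Qed.

Lemma betaqm1 : beta ^+ (q - 1) = -1.
Proof.
apply: (mulIf beta0) => /=; rewrite -exprSr subn1 prednK ?q_gt0 // betaq.
by rewrite mulN1r.
Qed.

Lemma main_sec :
  [/\ (c != 0 -> c != 1 -> c != -1 ->
         fg_iso (fgraph_of (fpoly q c))
           (fg_sum (Ccycle 1) (lines_part q a beta c (P1 q beta)))),
      (c = 1 ->
         fg_iso (fgraph_of (fpoly q c))
           (fg_sum (CT 1 (q - 1))
              (lines_part q a beta c (P1 q beta :\ Lline q beta 1 0)))) &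
      (c = -1 ->
         fg_iso (fgraph_of (fpoly q c))
           (fg_sum (CT 1 (q - 1))
              (lines_part q a beta c (P1 q beta :\ Lline q beta 0 1))))].
Proof.
split.
- move=> c0 c1 cm1; apply: generic_iso => L hL y hy.
  have y0 : y != 0 by move: hy; rewrite !inE => /andP[].
  rewrite hf_eq0; apply/negP => /eqP e.
  have := pow_norm y0; rewrite e exprD expr1 (FqP _ cFq) -expr2 => h.
  have : (c - 1) * (c + 1) = 0 by rewrite -subr_sqr expr1n h subrr.
  move/eqP; rewrite mulf_eq0 subr_eq0 addr_eq0 => /orP[]; by [rewrite (negPf c1) | rewrite (negPf cm1)].
- move=> c1; apply: degen_iso; first exact: L0_1_P1.
    move=> y hy; apply/eqP; rewrite hf_eq0 c1.
    move: hy => /setD1P [y0 /LlineP [l hl ey]].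
    have l0 : l != 0 by apply: contra y0 => /eqP l0; rewrite ey l0 mul0r.
    by rewrite ey exprMn (Fq_unit1 hl l0) mul0r addr0 expr1n mulr1.
  move=> L hL ne y hy; rewrite hf_eq0 c1; apply/negP => /eqP e.
  have y0 : y != 0 by move: hy; rewrite !inE => /andP[].
  have yq : y \in Fq F q.
    by apply/FqP; rewrite -(prednK q_gt0) exprSr -subn1 e mul1r.
  have := line_uniq hL L0_1_P1 y0 _ (in_L0_1 yq).
  by move: hy; rewrite !inE => /andP[_ ->] /(_ isT) eL; rewrite eL eqxx in ne.
- move=> cm1; apply: degen_iso; first exact: L0_m1_P1.
    move=> y hy; apply/eqP; rewrite hf_eq0 cm1.
    move: hy => /setD1P [y0 /LlineP [l hl ey]].
    have l0 : l != 0 by apply: contra y0 => /eqP l0; rewrite ey l0 mul0r.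
    by rewrite ey exprMn (Fq_unit1 hl l0) mul1r add0r mul1r betaqm1.
  move=> L hL ne y hy; rewrite hf_eq0 cm1; apply/negP => /eqP e.
  have y0 : y != 0 by move: hy; rewrite !inE => /andP[].
  have yq : y / beta \in Fq F q.
    have eq : y ^+ q = - y by rewrite -(prednK q_gt0) exprSr -subn1 e mulN1r.
    by apply/FqP; rewrite phiM phiV betaq eq invrN mulrNN.
  have := line_uniq hL L0_m1_P1 y0 _ (in_L0_m1 yq).
  by move: hy; rewrite !inE => /andP[_ ->] /(_ isT) eL; rewrite eL eqxx in ne.
Qed.

End Field.

Unset Implicit Arguments.

Theorem mainTheorem6 (F : finFieldType) (q p k : nat) (a beta c : F) :
  prime p -> (0 < k)%N -> q = (p ^ k)%N -> odd q ->
  #|F| = (q ^ 2)%N ->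
  a \in Fq F q -> a != 0 -> (forall b : F, b \in Fq F q -> b ^+ 2 != a) ->
  beta ^+ 2 = a ->
  c \in Fq F q ->
  [/\ (c != 0 -> c != 1 -> c != -1 ->
         fg_iso (fgraph_of (fpoly q c))
           (fg_sum (Ccycle 1) (lines_part q a beta c (P1 q beta)))),
      (c = 1 ->
         fg_iso (fgraph_of (fpoly q c))
           (fg_sum (CT 1 (q - 1))
              (lines_part q a beta c (P1 q beta :\ Lline q beta 1 0)))) &
      (c = -1 ->
         fg_iso (fgraph_of (fpoly q c))
           (fg_sum (CT 1 (q - 1))
              (lines_part q a beta c (P1 q beta :\ Lline q beta 0 1))))].
Proof.
move=> pP k0 qE qo cF aF a0 ns bE cF'.
exact: (@main_sec F q p k a beta c pP k0 qE qo cF aF a0 ns bE cF').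
Qed.
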